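(* Let $G$ be a graph. If $G$ admits a radial subtree model $(T,\mathcal{S})$, then $G$ is a leaf power.
   Context: A subtree model of a graph $G$ is a pair $(T,\mathcal{S})$ where $T$ is a tree and $\mathcal{S}=\{S_v \mid v\in V(G)\}$ is a family of connected subtrees of $T$ such that for any two distinct vertices $u,v$, $S_u\cap S_v\neq\emptyset$ if and only if $uv\in E(G)$. A radial subtree model (RS model) is a subtree model in which for each $v\in V(G)$ there is a node $c_v\in V(T)$ (center) and an integer $r_v\ge 0$ (radius) such that $S_v$ is the subtree of $T$ induced by exactly the nodes at distance at most $r_v$ from $c_v$. For a positive integer $k$, $G$ is a $k$-leaf power if there is a tree $T'$ and a bijection $\tau$ from $V(G)$ to the set of leaves of $T'$ such that distinct $u,v$ are adjacent in $G$ iff $\tau(u),\tau(v)$ are at distance at most $k$ in $T'$. $G$ is a leaf power if it is a $k$-leaf power for some positive integer $k$. *)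

(* Defs.v *)
From mathcomp Require Import all_boot.
Set Implicit Arguments. Unset Strict Implicit. Unset Printing Implicit Defensive.

Definition simple_graph (V : finType) (adj : rel V) : Prop :=
  symmetric adj /\ irreflexive adj.

Definition within (N : finType) (t : rel N) (x y : N) (k : nat) : Prop :=
  exists p : seq N, [/\ path t x p, last x p = y & size p <= k].

Definition has_cycle (N : finType) (t : rel N) : Prop :=
  exists (x : N) (p : seq N),
    [/\ path t x p, uniq (x :: p), 2 <= size p & t (last x p) x].

Definition is_tree (N : finType) (t : rel N) : Prop :=
  [/\ simple_graph t, (forall x y : N, connect t x y) & ~ has_cycle t].

Definition connected_subtree (N : finType) (t : rel N) (S : {set N}) : Prop :=
  S != set0 /\
  forall x y, x \in S -> y \in S ->
    exists p : seq N, [/\ path t x p, last x p = y & all (fun z => z \in S) p].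

Definition subtree_model (V : finType) (adj : rel V)
    (N : finType) (t : rel N) (S : V -> {set N}) : Prop :=
  [/\ is_tree t,
      (forall v, connected_subtree t (S v)) &
      (forall u v, u != v -> ((S u :&: S v != set0) <-> adj u v))].

Definition radial_subtree_model (V : finType) (adj : rel V)
    (N : finType) (t : rel N) (S : V -> {set N}) : Prop :=
  subtree_model adj t S /\
  exists (c : V -> N) (r : V -> nat),
    forall v x, x \in S v <-> within t (c v) x (r v).

(* Leaves of a tree: nodes of degree at most one (so a one-node tree has one leaf). *)
Definition is_leaf (N : finType) (t : rel N) (x : N) : Prop :=
  #|[set y | t x y]| <= 1.

Definition k_leaf_power (V : finType) (adj : rel V) (k : nat) : Prop :=
  exists (N : finType) (t : rel N) (tau : V -> N),
    [/\ is_tree t,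
        injective tau,
        (forall v, is_leaf t (tau v)),
        (forall x, is_leaf t x -> exists v, tau v = x) &
        (forall u v, u != v -> (adj u v <-> within t (tau u) (tau v) k))].

Definition leaf_power (V : finType) (adj : rel V) : Prop :=
  exists k, 0 < k /\ k_leaf_power adj k.

(* Main.v *)
Require Import Defs.
From mathcomp Require Import all_boot.
From mathcomp Require Import zify.
Set Implicit Arguments. Unset Strict Implicit. Unset Printing Implicit Defensive.

Section Walks.
Variables (N : finType) (t : rel N).

Lemma within_refl x : within t x x 0.
Proof. by exists [::]. Qed.

Lemma within_mono x y k k' : k <= k' -> within t x y k -> within t x y k'.
Proof. move=> hk [p [hp hl hs]]; exists p; split => //; exact: leq_trans hs hk. Qed.

Lemma within_trans x y z a b :
  within t x y a -> within t y z b -> within t x z (a + b).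
Proof.
move=> [p [hp hl hs]] [q [hq hq' hs']]; exists (p ++ q); split.
- by rewrite cat_path hp hl hq.
- by rewrite last_cat hl.
- rewrite size_cat; lia.
Qed.

Lemma within_step x y : t x y -> within t x y 1.
Proof. by move=> h; exists [:: y]; rewrite /= h. Qed.

Lemma within_sym_aux (ts : symmetric t) x p :
  path t x p -> within t (last x p) x (size p).
Proof.
elim: p x => [|z p IH] x /=; first by move=> _; exact: within_refl.
case/andP=> hxz hp; rewrite -addn1; apply: within_trans (IH z hp) _.
by apply: within_step; rewrite ts.
Qed.

Lemma within_sym (ts : symmetric t) x y k : within t x y k -> within t y x k.
Proof.
move=> [p [hp hl hs]]; apply: within_mono hs _; rewrite -hl.
exact: within_sym_aux.
Qed.

Lemma within_symI (ts : symmetric t) x y k : within t x y k <-> within t y x k.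
Proof. by split; apply: within_sym. Qed.

Lemma within_split x y a b :
  within t x y (a + b) -> exists z, within t x z a /\ within t z y b.
Proof.
move=> [p [hp hl hs]]; exists (last x (take a p)).
move: hp; rewrite -{1}(cat_take_drop a p) cat_path => /andP[h1 h2]; split.
- exists (take a p); split => //; rewrite size_take; case: ifP => //; lia.
- exists (drop a p); split => //.
  + by rewrite -last_cat cat_take_drop.
  + rewrite size_drop; lia.
Qed.

Lemma within_connect x y : connect t x y <-> exists k, within t x y k.
Proof.
split.
- by case/connectP=> p hp hl; exists (size p); exists p.
- by case=> k [p [hp hl _]]; apply/connectP; exists p.
Qed.

End Walks.

Section Ext.
Variables (N M : finType) (t : rel N) (T : rel M) (f : N -> M) (g : M -> N)
  (x : M) (c : N).
Hypotheses (fK : cancel f g) (fT : forall a b, T (f a) (f b) = t a b)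
  (fx : forall a, f a != x) (onto : forall z, z != x -> f (g z) = z)
  (Tx : forall z, T x z = (z == f c)) (Tx' : forall z, T z x = (z == f c)).

Lemma shortcut n : forall p z0, size p <= n -> z0 != x -> path T z0 p ->
  last z0 p != x ->
  exists q, [/\ path T z0 q, last z0 q = last z0 p, size q <= size p
              & all (fun z => z != x) q].
Proof.
elim: n => [|n IH] [|w p] z0 hs hz0 hp hl; try by exists [::].
move: hp => /= /andP[hw hp].
have [wx|wx] := eqVneq w x.
- subst w; move: hw; rewrite Tx' => /eqP hz0c.
  case: p hs hp hl => [|w2 p] hs hp hl; first by rewrite /= eqxx in hl.
  move: hp => /= /andP[hw2 hp]; move: hw2; rewrite Tx => /eqP hw2.
  subst w2 z0.
  have [|q [q1 q2 q3 q4]] := IH p (f c) _ hz0 hp hl; first by move: hs => /=; lia.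
  by exists q; split => //; move: q3 => /=; lia.
- have [|q [q1 q2 q3 q4]] := IH p w _ wx hp hl; first by move: hs => /=; lia.
  by exists (w :: q); split => //=; rewrite ?hw ?q1 ?wx ?q4.
Qed.

Lemma pull p z0 : path T (f z0) p -> all (fun z => z != x) p ->
  path t z0 (map g p) /\ last z0 (map g p) = g (last (f z0) p).
Proof.
elim: p z0 => [|w p IH] z0 /=; first by rewrite fK.
case/andP=> hw hp /andP[wx ha].
move: hw hp; rewrite -(onto wx) fT => hw hp.
have [h1 h2] := IH _ hp ha; rewrite fK; split; first by rewrite hw h1.
by rewrite h2.
Qed.

Lemma push p z0 : path t z0 p ->
  path T (f z0) (map f p) /\ last (f z0) (map f p) = f (last z0 p).
Proof.
elim: p z0 => [|w p IH] z0 //= /andP[hw hp].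
have [h1 h2] := IH _ hp; by rewrite fT hw h1 h2.
Qed.

Lemma within_f a b k : within T (f a) (f b) k <-> within t a b k.
Proof.
split.
- move=> [p [hp hl hs]].
  have hl' : last (f a) p != x by rewrite hl.
  have [q [q1 q2 q3 q4]] := shortcut (leqnn (size p)) (fx a) hp hl'.
  have [h1 h2] := pull q1 q4.
  exists (map g q); split => //; last by rewrite size_map; lia.
  by rewrite h2 q2 hl fK.
- move=> [p [hp hl hs]]; have [h1 h2] := push hp.
  by exists (map f p); rewrite h2 hl size_map.
Qed.

Lemma within_x b k : within T x (f b) k <-> 0 < k /\ within t c b k.-1.
Proof.
split.
- move=> [[|w p] [hp hl hs]]; first by move: (fx b); rewrite -hl /= eqxx.
  move: hp => /= /andP[]; rewrite Tx => /eqP ? hp; subst w.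
  move: hs hl => /= hs hl.
  split; first by lia.
  apply/within_f; exists p; split => //; lia.
- move=> [hk /within_f [p [hp hl hs]]]; exists (f c :: p); split => //=.
  + by rewrite Tx eqxx.
  + lia.
Qed.

Lemma cycle_avoid z0 p : path T z0 p -> uniq (z0 :: p) -> 2 <= size p ->
  T (last z0 p) z0 -> all (fun z => z != x) (z0 :: p).
Proof.
move=> hp hu hs hl.
have hc : cycle T (z0 :: p) by rewrite /= rcons_path hp hl.
apply/allP => z hz; apply/negP => /eqP ?; subst z.
case: (rot_to hz) => i s' hrot.
have hs' : 2 < size (z0 :: p) by [].
move: hc hu hs'; rewrite -(rot_cycle i) -(rot_uniq i) -(size_rot i) hrot.
case: s' {hrot} => [|w1 [|y s3]] //=.
move=> /and3P[hxw1 _ ]; rewrite rcons_path => /andP[_ hl3].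
move: hxw1 hl3; rewrite Tx Tx' => /eqP-> /eqP e3.
case/and4P=> _ /negP hn _ _ _; apply: hn; rewrite -e3; exact: mem_last.
Qed.

Lemma tree_ext_to : is_tree t -> is_tree T.
Proof.
case=> [[ts ti] tc tnc]; have TS : symmetric T.
  move=> z w; have [->|zx] := eqVneq z x; first by rewrite Tx Tx'.
  have [->|wx] := eqVneq w x; first by rewrite Tx Tx'.
  by rewrite -(onto zx) -(onto wx) !fT ts.
split; [split => // | | ].
- move=> z; have [->|zx] := eqVneq z x; first by rewrite Tx eq_sym (negbTE (fx c)).
  by rewrite -(onto zx) fT ti.
- have conn_f : forall a b, connect T (f a) (f b).
    move=> a b; have /within_connect [k hk] := tc a b.
    by apply/within_connect; exists k; apply/within_f.
  have conn_x : forall b, connect T x (f b).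
    move=> b; have /within_connect [k hk] := tc c b.
    by apply/within_connect; exists k.+1; apply/within_x.
  move=> z w.
  have [->|zx] := eqVneq z x; have [->|wx] := eqVneq w x.
  + exact: connect0.
  + by rewrite -(onto wx).
  + rewrite -(onto zx); have /within_connect [k hk] := conn_x (g z).
    by apply/within_connect; exists k; apply: within_sym.
  + by rewrite -(onto zx) -(onto wx).
- move=> [z0 [p [hp hu hs hl]]]; apply: tnc.
  have hall := cycle_avoid hp hu hs hl.
  have /andP[z0x hallp] := hall.
  have lx : last z0 p != x by apply: (allP hall); exact: mem_last.
  have hp' : path T (f (g z0)) p by rewrite onto.
  have [h1 h2] := pull hp' hallp.
  exists (g z0), (map g p); split.
  + exact: h1.
  + rewrite -map_cons map_inj_in_uniq // => u v hu' hv' e.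
    have ux := allP hall u hu'; have vx := allP hall v hv'.
    by rewrite -(onto ux) -(onto vx) e.
  + by rewrite size_map.
  + by rewrite h2 onto // -fT !onto.
Qed.

Lemma tree_ext_from : is_tree T -> is_tree t.
Proof.
case=> [[TS Ti] Tc Tnc]; split; [split | |].
- by move=> a b; rewrite -!fT TS.
- by move=> a; rewrite -fT Ti.
- move=> a b; have /within_connect [k hk] := Tc (f a) (f b).
  by apply/within_connect; exists k; apply/within_f.
- move=> [z0 [p [hp hu hs hl]]]; apply: Tnc.
  have [h1 h2] := push hp.
  exists (f z0), (map f p); split => //.
  + by rewrite -map_cons (map_inj_uniq (can_inj fK)).
  + by rewrite size_map.
  + by rewrite h2 fT.
Qed.

Lemma leaf_x : is_leaf T x.
Proof.
rewrite /is_leaf (_ : [set z | T x z] = [set f c]) ?cards1 //.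
by apply/setP => z; rewrite !inE Tx.
Qed.

Lemma leaf_back a : is_leaf T (f a) -> is_leaf t a.
Proof.
rewrite /is_leaf => h; apply: leq_trans h.
rewrite -(card_imset _ (can_inj fK)); apply: subset_leq_card.
by apply/subsetP => z /imsetP [b]; rewrite !inE => hb ->; rewrite fT.
Qed.

Lemma leaf_fwd a : a != c -> is_leaf t a -> is_leaf T (f a).
Proof.
rewrite /is_leaf => hac h; apply: leq_trans h.
rewrite -(card_imset _ (can_inj fK)); apply: subset_leq_card.
apply/subsetP => z; rewrite inE => hz.
have zx : z != x.
  apply: contraTneq hz => ->; rewrite Tx' (inj_eq (can_inj fK)); exact: hac.
apply/imsetP; exists (g z); last by rewrite onto.
by rewrite inE -fT onto.
Qed.

End Ext.

Definition attach (N : finType) (t : rel N) (c : N) : rel (option N) :=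
  fun p q => match p, q with
  | Some a, Some b => t a b
  | None, Some b => b == c
  | Some a, None => a == c
  | None, None => false end.

Lemma attach1 (M : finType) (T : rel M) (y : M) : is_tree T ->
  [/\ is_tree (attach T y),
      (forall a b k, within (attach T y) (Some a) (Some b) k <-> within T a b k),
      (forall b k, within (attach T y) None (Some b) k <-> 0 < k /\ within T y b k.-1),
      is_leaf (attach T y) None &
      (forall a, a != y -> is_leaf T a -> is_leaf (attach T y) (Some a))].
Proof.
move=> hT.
have fK : cancel (@Some M) (odflt y) by [].
have fT : forall a b, attach T y (Some a) (Some b) = T a b by [].
have fx : forall a : M, Some a != None :> option M by [].
have onto : forall z, z != None -> Some (odflt y z) = z by case.
have Tx : forall z, attach T y None z = (z == Some y) by case.
have Tx' : forall z, attach T y z None = (z == Some y) by case.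
split.
- exact: (tree_ext_to fK fT fx onto Tx Tx' hT).
- move=> a b k; exact: (within_f fK fT fx onto Tx Tx').
- move=> b k; exact: (within_x fK fT fx onto Tx Tx').
- exact: (leaf_x Tx).
- move=> a; exact: (leaf_fwd fK fT onto Tx').
Qed.

Lemma prune_step (M : finType) (T : rel M) (x y : M) :
  is_tree T -> (forall z, T x z = (z == y)) ->
  exists (t : rel {z : M | z != x}),
  [/\ is_tree t, (forall a b k, within t a b k <-> within T (val a) (val b) k),
      (forall a, is_leaf T (val a) -> is_leaf t a) & #|{: {z : M | z != x}}| < #|M| ].
Proof.
move=> hT Tx.
pose N := {z : M | z != x}.
have TS : symmetric T by case: hT => [[]].
have Txy : T x y by rewrite Tx.
have yx : y != x by apply: contraTneq Txy => ->; case: hT => [[_ ->]].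
pose c : N := Sub y yx.
pose t : rel N := fun a b => T (val a) (val b).
have fK : cancel (val : N -> M) (insubd c) by move=> a; exact: valKd.
have fT : forall a b, T (val a) (val b) = t a b by [].
have fx : forall a : N, val a != x by move=> a; exact: valP a.
have onto : forall z, z != x -> val (insubd c z) = z by move=> z zx; rewrite /insubd insubT.
have Tx' : forall z, T z x = (z == val c) by move=> z; rewrite TS Tx.
have Tx2 : forall z, T x z = (z == val c) by exact: Tx.
exists t; split.
- exact: (tree_ext_from fK fT fx onto Tx2 Tx' hT).
- move=> a b k; symmetry; exact: (within_f fK fT fx onto Tx2 Tx').
- move=> a; exact: (leaf_back fK fT).
- rewrite card_sig.
  have -> : #|[pred z | z != x]| = #|predC1 x| by apply: eq_card.
  rewrite cardC1; have : 0 < #|M| by apply/card_gt0P; exists x.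
  lia.
Qed.

Lemma attach_path (L : nat) (M : finType) (T : rel M) (y : M) : is_tree T ->
  exists (M' : finType) (T' : rel M') (g : M -> M') (x : M'),
   [/\ is_tree T', (forall a b k, within T' (g a) (g b) k <-> within T a b k),
       (forall b k, within T' x (g b) k <-> L < k /\ within T y b (k - L.+1)),
       is_leaf T' x & (forall a, a != y -> is_leaf T a -> is_leaf T' (g a))].
Proof.
move=> hT; elim: L => [|L [M' [T' [g [x [h1 h2 h3 h4 h5]]]]]].
- have [a1 a2 a3 a4 a5] := attach1 y hT.
  exists (option M), (attach T y), Some, None; split => //.
  move=> b k; apply: iff_trans (a3 _ _) _.
  by split => -[hk hw]; split => //; rewrite subn1 in hw *.
- have [a1 a2 a3 a4 a5] := attach1 x h1.
  exists (option M'), (attach T' x), (fun a => Some (g a)), None; split => //.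
  + move=> a b k; exact: iff_trans (a2 _ _ _) (h2 _ _ _).
  + move=> b k; split.
    * move/a3 => [hk /h3 [hk' hw]]; split; first lia.
      by have <- : k.-1 - L.+1 = k - L.+2 by lia.
    * move=> [hk hw]; apply/a3; split; first lia.
      apply/h3; split; first lia.
      by have -> : k.-1 - L.+1 = k - L.+2 by lia.
  + move=> a ay la; apply: a5; last exact: h5.
    apply/eqP => e; have : within T' x (g a) 0 by rewrite -e; exact: within_refl.
    by case/h3.
Qed.

Lemma build (V N : finType) (t : rel N) (c : V -> N) (L : V -> nat) :
  is_tree t -> (forall v, 0 < L v) -> forall s : seq V,
  exists (M : finType) (T : rel M) (f : N -> M) (tau : V -> M),
  [/\ is_tree T, (forall a b k, within T (f a) (f b) k <-> within t a b k),
      (forall v, v \in s -> is_leaf T (tau v)),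
      (forall v b k, v \in s ->
         (within T (tau v) (f b) k <-> L v <= k /\ within t (c v) b (k - L v))) &
      (forall u v k, u \in s -> v \in s -> u != v ->
         (within T (tau u) (tau v) k <->
            L u + L v <= k /\ within t (c u) (c v) (k - L u - L v)))].
Proof.
move=> ht hL; elim=> [|v s [M [T [f [tau [h1 h2 h3 h4 h5]]]]]].
  by exists N, t, id, c; split.
have TS : symmetric T by case: h1 => [[]].
have ts : symmetric t by case: ht => [[]].
have [M' [T' [g [x [a1 a2 a3 a4 a5]]]]] := attach_path (L v).-1 (f (c v)) h1.
have TS' : symmetric T' by case: a1 => [[]].
have Lv := prednK (hL v).
have taunf : forall u b, u \in s -> tau u != f b.
  move=> u b us; apply/eqP => e.
  have : within T (tau u) (f b) 0 by rewrite e; exact: within_refl.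
  case/(h4 _ _ _ us) => hk _; have := hL u; lia.
have key : forall w k, w \in s -> w != v ->
    (within T' x (g (tau w)) k <->
       L v + L w <= k /\ within t (c v) (c w) (k - L v - L w)).
  move=> w k ws wv; split.
  - move/a3; rewrite Lv => -[hk /(within_symI TS) /(h4 _ _ _ ws) [hk' hw]].
    split; first lia.
    exact: within_sym ts _ _ _ hw.
  - move=> [hk hw]; apply/a3; rewrite Lv; split; first lia.
    apply/(within_symI TS); apply/(h4 _ _ _ ws); split; first lia.
    exact: within_sym ts _ _ _ hw.
exists M', T', (fun a => g (f a)), (fun u => if u == v then x else g (tau u)).
split.
- exact: a1.
- move=> a b k; exact: iff_trans (a2 _ _ _) (h2 _ _ _).
- move=> u; rewrite inE; have [->|uv] := eqVneq u v => /= hu; first exact: a4.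
  by apply: a5; [exact: taunf | exact: h3].
- move=> u b k; rewrite inE; have [->|uv] := eqVneq u v => /= hu.
  + split.
    * move/a3; rewrite Lv => -[hk /h2 hw]; split; first lia; exact: hw.
    * move=> [hk hw]; apply/a3; rewrite Lv; split; first lia; exact/h2.
  + exact: iff_trans (a2 _ _ _) (h4 _ _ _ hu).
- move=> u w k; rewrite !inE.
  have [->|uv] := eqVneq u v; have [->|wv] := eqVneq w v => /=.
  + by [].
  + by move=> _ ws _; exact: key.
  + move=> us _ _.
    apply: iff_trans (within_symI TS' _ _ _) _; apply: iff_trans (key _ _ us uv) _.
    have -> : k - L v - L u = k - L u - L v by lia.
    rewrite addnC; split => -[hk hw]; split => //; exact: within_sym ts _ _ _ hw.
  + move=> us ws uw; exact: iff_trans (a2 _ _ _) (h5 _ _ _ us ws uw).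
Qed.

Lemma prune (V : finType) (v0 : V) n : forall (M : finType) (T : rel M) (tau : V -> M),
  #|M| <= n -> is_tree T -> (forall v, is_leaf T (tau v)) ->
  exists (M' : finType) (T' : rel M') (tau' : V -> M'),
  [/\ is_tree T', (forall v, is_leaf T' (tau' v)),
      (forall x, is_leaf T' x -> exists v, tau' v = x) &
      (forall u v k, within T' (tau' u) (tau' v) k <-> within T (tau u) (tau v) k)].
Proof.
elim: n => [|n IH] M T tau hM hT hl.
  have : 0 < #|M| by apply/card_gt0P; exists (tau v0).
  lia.
have [hall|] := boolP [forall x : M, (#|[set y | T x y]| <= 1) ==> [exists v, tau v == x]].
  exists M, T, tau; split => //.
  move=> x lx; have /existsP [v /eqP e] := implyP (forallP hall x) lx; by exists v.
rewrite negb_forall => /existsP [x]; rewrite negb_imply => /andP [lx /existsPn nx].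
have [y hy] : exists y, forall z, T x z = (z == y).
  move: lx; rewrite leq_eqVlt ltnS leqn0 => /orP [/cards1P [y e] | e0].
  - by exists y => z; move/setP: e => /(_ z); rewrite !inE.
  - exfalso; case: hT => _ hc _.
    have /connectP [[|w p] hp hl'] := hc x (tau v0).
    + by move: (nx v0); rewrite hl' eqxx.
    + have : w \in [set z | T x z] by rewrite inE; case/andP: hp.
      by move: e0; rewrite cards_eq0 => /eqP ->; rewrite inE.
have [t' [t1 t2 t3 t4]] := prune_step hT hy.
pose d : {z : M | z != x} := Sub (tau v0) (nx v0).
pose tau1 := fun v => insubd d (tau v).
have vt : forall v, val (tau1 v) = tau v by move=> v; rewrite /tau1 /insubd insubT.
have hM' : #|{: {z : M | z != x}}| <= n by move: t4 hM; lia.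
have hl' : forall v, is_leaf t' (tau1 v) by move=> v; apply: t3; rewrite vt.
have [M' [T' [tau' [s1 s2 s3 s4]]]] := IH _ t' tau1 hM' t1 hl'.
exists M', T', tau'; split => // u v k.
apply: iff_trans (s4 _ _ _) _; apply: iff_trans (t2 _ _ _) _; by rewrite !vt.
Qed.

Theorem lemma2 (V : finType) (adj : rel V) :
  simple_graph adj ->
  (exists (N : finType) (t : rel N) (S : V -> {set N}),
      radial_subtree_model adj t S) ->
  leaf_power adj.
Proof.
move=> _ [N [t [S [[ht hS hadj] [c [r hr]]]]]].
have ts : symmetric t by case: ht => [[]].
have cen : forall u v, u != v -> (adj u v <-> within t (c u) (c v) (r u + r v)).
  move=> u v uv; apply: iff_trans (iff_sym (hadj u v uv)) _; split.
  - case/set0Pn => z; rewrite inE => /andP [/hr hu /hr hv].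
    exact: within_trans hu (within_sym ts hv).
  - case/within_split => z [hu hv]; apply/set0Pn; exists z.
    rewrite inE; apply/andP; split; apply/hr => //; exact: within_sym ts _ _ _ hv.
case: (pickP (fun _ : V => true)) => [v0 _|hV]; last first.
  exists 1; split => //.
  have tau : V -> void by move=> v; have := hV v.
  exists void, (fun _ _ => false), tau; split.
  - split; [by split | by case | by case => [[]]].
  - by move=> v; have := hV v.
  - by move=> v; have := hV v.
  - by case.
  - by move=> v; have := hV v.
pose R := \max_(v : V) r v.
pose L := fun v => (R - r v).+1.
have [M [T [f [tau [b1 b2 b3 b4 b5]]]]] :=
  @build V N t c L ht (fun v => ltn0Sn _) (enum V).
have me : forall v : V, v \in enum V by move=> v; rewrite mem_enum.
have hl : forall v, is_leaf T (tau v) by move=> v; exact: b3.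
have := prune v0 (leqnn #|M|) b1 hl.
move=> [M' [T' [tau' [p1 p2 p3 p4]]]].
exists (2 * R + 2); split; first by rewrite addn2.
exists M', T', tau'; split => //.
- move=> u v e; apply/eqP; apply/negPn/negP => uv.
  have : within T' (tau' u) (tau' v) 0 by rewrite e; exact: within_refl.
  move/p4/(b5 _ _ _ (me u) (me v) uv) => [hk _]; move: hk; rewrite /L; lia.
- move=> u v uv; apply: iff_trans (cen u v uv) _; apply: iff_sym.
  apply: iff_trans (p4 _ _ _) _; apply: iff_trans (b5 _ _ _ (me u) (me v) uv) _.
  have ru : r u <= R by exact: leq_bigmax.
  have rv : r v <= R by exact: leq_bigmax.
  have -> : 2 * R + 2 - L u - L v = r u + r v by rewrite /L; lia.
  split => [[]//|h]; split => //; rewrite /L; lia.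
Qed.
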